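(* For $x\in[0,2^{10})$ write $\lfloor x\rfloor=\sum_{k=0}^{9}2^{9-k}e_k$ with $e_k\in\{0,1\}$ and $x=\lfloor x\rfloor+\sum_{k=0}^{\infty}s^k10^{-k-1}$ with $s^k\in\{0,\dots,9\}$, using the decimal expansion without an infinite tail of $9$'s. Define $g:[0,2^{10})\to[0,2^{10})$ by $$g(x)=\sum_{k=0}^{9}2^{9-k}\big(e_k+\delta(k,s^0)\bmod 2\big)+\sum_{k=0}^{\infty}s^{k+1}10^{-k-1},$$ where $\delta(k,j)=1$ if $k=j$ and $0$ otherwise. Let $I=\{n/10 : n\in\{0,1,\dots,2^{10}\cdot10\}\}$ and, for $x^0\in[0,2^{10})$, let $x^{n+1}=g(x^n)$ for $n\ge 0$. Let $\mathcal{L}=\{x^0\in[0,2^{10}) : x^n\notin I \text{ for all } n\in\mathbb{N}\}$. Then for every $x^0\in\mathcal{L}$, the Lyapunov exponent $$\lambda(x^0)=\lim_{n\to+\infty}\frac{1}{n}\sum_{i=1}^{n}\ln\left|g'(x^{i-1})\right|$$ exists and equals $\ln(10)$. *)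

(* Defs.v *)
From Stdlib Require Import Reals ZArith.
From Coquelicot Require Import Coquelicot.
Open Scope R_scope.

(* floor of a real (Int_part x = up x - 1 is the floor) *)
Definition flr (x : R) : Z := Int_part x.

Definition ebit (k : nat) (x : R) : Z :=
  Z.modulo (Z.div (flr x) (2 ^ Z.of_nat (9 - k))) 2.

(* decimal digit s^k of the fractional part: x = floor x + sum_k s^k 10^(-k-1),
   expansion without infinite tail of 9's (the floor-based digits). *)
Definition sdig (k : nat) (x : R) : Z :=
  Z.modulo (flr ((x - IZR (flr x)) * 10 ^ (S k))) 10.

Definition delta (k : nat) (j : Z) : Z := if Z.eqb (Z.of_nat k) j then 1%Z else 0%Z.

Fixpoint sumR (f : nat -> R) (n : nat) : R :=
  match n with O => 0 | S m => sumR f m + f m end.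

Definition g (x : R) : R :=
  sumR (fun k => 2 ^ (9 - k) * IZR (Z.modulo (ebit k x + delta k (sdig 0 x)) 2)) 10
  + Series (fun k => IZR (sdig (S k) x) / 10 ^ (S k)).

Definition inI (x : R) : Prop := exists n : nat, (n <= 10240)%nat /\ x = INR n / 10.

Fixpoint orbit (x0 : R) (n : nat) : R :=
  match n with O => x0 | S m => g (orbit x0 m) end.

Definition inL (x0 : R) : Prop :=
  0 <= x0 < 2 ^ 10 /\ forall n : nat, ~ inI (orbit x0 n).

Definition lyap_avg (x0 : R) (n : nat) : R :=
  / INR n * sumR (fun i => ln (Rabs (Derive g (orbit x0 i)))) n.

(* Main.v *)
Require Import Defs.
From Stdlib Require Import Reals Lra Lia ZArith.
From Coquelicot Require Import Coquelicot.
Open Scope R_scope.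

Lemma flr_spec x : IZR (flr x) <= x < IZR (flr x) + 1.
Proof. unfold flr; destruct (base_Int_part x); lra. Qed.

Lemma flr_unique z x : IZR z <= x < IZR z + 1 -> flr x = z.
Proof.
  intros H. pose proof (flr_spec x).
  assert (flr x - z = 0)%Z as E.
  { apply one_IZR_lt1. rewrite minus_IZR. lra. }
  lia.
Qed.

Definition fr y := y - IZR (flr y).
Definition FF k y := flr (fr y * 10 ^ k).

Lemma flr10 t : (0 <= flr (10*t) - 10 * flr t <= 9)%Z.
Proof.
  pose proof (flr_spec t) as [H1 H2]. pose proof (flr_spec (10*t)) as [H3 H4].
  assert (10 * flr t < flr (10*t) + 1)%Z.
  { apply lt_IZR. rewrite plus_IZR, mult_IZR. lra. }
  assert (flr (10*t) < 10 * flr t + 10)%Z.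
  { apply lt_IZR. rewrite plus_IZR, mult_IZR. lra. }
  lia.
Qed.

Lemma FFS k y : FF (S k) y = (10 * FF k y + sdig k y)%Z /\ (0 <= sdig k y <= 9)%Z.
Proof.
  assert (E : FF (S k) y = flr (10 * (fr y * 10 ^ k))).
  { unfold FF. f_equal. simpl. ring. }
  assert (D : sdig k y = Z.modulo (FF (S k) y) 10) by reflexivity.
  pose proof (flr10 (fr y * 10 ^ k)) as B.
  rewrite <- E in B. fold (FF k y) in B.
  rewrite D. split; [|pose proof (Z.mod_pos_bound (FF (S k) y) 10); lia].
  remember (FF (S k) y) as u. remember (FF k y) as v.
  assert (u = (u - 10 * v) + v * 10)%Z as E2 by lia.
  assert (M : (u mod 10 = u - 10 * v)%Z).
  { rewrite E2 at 1. rewrite Z.mod_add by lia. rewrite Z.mod_small; lia. }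
  lia.
Qed.

Lemma FF0 y : FF 0 y = 0%Z.
Proof.
  apply flr_unique. unfold fr. pose proof (flr_spec y). simpl. lra.
Qed.

Lemma sdig0 y : sdig 0 y = FF 1 y.
Proof. destruct (FFS 0 y) as [H _]. rewrite FF0 in H. lia. Qed.

Lemma psum y N :
  sum_n (fun k => IZR (sdig (S k) y) / 10 ^ (S k)) N
  = IZR (FF (S (S N)) y) / 10 ^ (S N) - IZR (FF 1 y).
Proof.
  induction N.
  - rewrite sum_O. destruct (FFS 1 y) as [H _]. rewrite H, plus_IZR, mult_IZR.
    simpl. field.
  - rewrite sum_Sn, IHN. destruct (FFS (S (S N)) y) as [H _]. rewrite H, plus_IZR, mult_IZR.
    unfold plus; simpl. field; repeat split; try (apply pow_nonzero; lra).
Qed.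

Lemma series_val y :
  Series (fun k => IZR (sdig (S k) y) / 10 ^ (S k)) = 10 * fr y - IZR (FF 1 y).
Proof.
  apply is_series_unique.
  assert (L : is_lim_seq (sum_n (fun k => IZR (sdig (S k) y) / 10 ^ (S k)))
                (10 * fr y - IZR (FF 1 y))).
  { apply is_lim_seq_ext with (fun N => IZR (FF (S (S N)) y) / 10 ^ (S N) - IZR (FF 1 y)).
    { intros; rewrite psum; reflexivity. }
    apply (is_lim_seq_minus' _ (fun _ => IZR (FF 1 y))); [|apply is_lim_seq_const].
    apply is_lim_seq_le_le with (fun N => 10 * fr y - (/10) ^ (S N)) (fun _ => 10 * fr y).
    - intros N. pose proof (flr_spec (fr y * 10 ^ S (S N))) as [H1 H2].
      fold (FF (S (S N)) y) in H1, H2.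
      assert (P : 0 < 10 ^ S N) by (apply pow_lt; lra).
      rewrite pow_inv.
      replace (10 ^ S (S N)) with (10 * 10 ^ S N) in H1, H2 by (simpl; ring).
      split.
      + apply Rle_trans with ((fr y * (10 * 10 ^ S N) - 1) / 10 ^ S N).
        * right. field. lra.
        * unfold Rdiv. apply Rmult_le_compat_r; [apply Rlt_le, Rinv_0_lt_compat; lra|lra].
      + apply Rle_trans with ((fr y * (10 * 10 ^ S N)) / 10 ^ S N).
        * unfold Rdiv. apply Rmult_le_compat_r; [apply Rlt_le, Rinv_0_lt_compat; lra|lra].
        * right. field. lra.
    - assert (G : is_lim_seq (fun n => (/10) ^ S n) 0).
      { apply (is_lim_seq_incr_1 (fun n => (/10)^n)). apply is_lim_seq_geom.
        rewrite Rabs_pos_eq; [|apply Rlt_le, Rinv_0_lt_compat; lra].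
        apply (Rmult_lt_reg_l 10); [lra|]; rewrite Rinv_r; lra. }
      pose proof (is_lim_seq_minus' (fun _ => 10 * fr y) _ (10 * fr y) 0 (is_lim_seq_const _) G) as H.
      rewrite Rminus_0_r in H. exact H.
    - apply is_lim_seq_const. }
  exact L.
Qed.

Definition B (a s : Z) : R :=
  sumR (fun k => 2 ^ (9 - k) * IZR (Z.modulo (Z.modulo (Z.div a (2 ^ Z.of_nat (9 - k))) 2 + delta k s) 2)) 10.

Lemma g_eq y : g y = B (flr y) (sdig 0 y) + (10 * fr y - IZR (sdig 0 y)).
Proof. unfold g. rewrite series_val, sdig0. reflexivity. Qed.

Lemma B_range a s : 0 <= B a s <= 1023.
Proof.
  assert (Hh : forall z, 0 <= IZR (Z.modulo z 2) <= 1).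
  { intros z. assert (0 <= z mod 2 < 2)%Z by (apply Z.mod_pos_bound; lia).
    split; [apply IZR_le|apply IZR_le]; lia. }
  unfold B. simpl.
  repeat match goal with |- context [IZR (Z.modulo ?z 2)] =>
    let h := fresh in pose proof (Hh z) as h; set (IZR (Z.modulo z 2)) in * end.
  lra.
Qed.

Lemma g_range y : 0 <= g y < 1024.
Proof.
  rewrite g_eq, sdig0. pose proof (B_range (flr y) (FF 1 y)).
  pose proof (flr_spec (fr y * 10 ^ 1)). fold (FF 1 y) in H0.
  replace (fr y * 10 ^ 1) with (10 * fr y) in H0 by (simpl; ring). lra.
Qed.

Lemma g_deriv x m : IZR m < 10 * x < IZR m + 1 -> is_derive g x 10.
Proof.
  intros Hm.
  assert (Fm : flr (10 * x) = m) by (apply flr_unique; lra).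
  pose proof (flr10 x) as Hb. rewrite Fm in Hb.
  set (a := flr x) in *.
  assert (Loc : forall y, IZR m < 10 * y < IZR m + 1 -> flr y = a /\ sdig 0 y = (m - 10 * a)%Z).
  { intros y Hy.
    assert (Ha1 : IZR (10 * a) <= IZR m) by (apply IZR_le; lia).
    assert (Ha2 : IZR m + 1 <= IZR (10 * a + 10)) by (rewrite <- plus_IZR; apply IZR_le; lia).
    rewrite mult_IZR in Ha1. rewrite plus_IZR, mult_IZR in Ha2.
    assert (Fy : flr y = a) by (apply flr_unique; lra).
    split; [exact Fy|]. rewrite sdig0. unfold FF, fr. rewrite Fy.
    apply flr_unique. rewrite minus_IZR, mult_IZR. simpl. lra. }
  apply (is_derive_ext_loc (fun y => g x + 10 * (y - x))).
  - set (eps := Rmin (10 * x - IZR m) (IZR m + 1 - 10 * x) / 10).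
    assert (Pe : 0 < eps).
    { unfold eps. apply Rmult_lt_0_compat; [|lra]. apply Rmin_glb_lt; lra. }
    exists (mkposreal eps Pe). intros y Hy. change (Rabs (y - x) < eps) in Hy.
    assert (eps <= (10 * x - IZR m) / 10 /\ eps <= (IZR m + 1 - 10 * x) / 10).
    { unfold eps, Rdiv. split; apply Rmult_le_compat_r; try lra;
      [apply Rmin_l|apply Rmin_r]. }
    apply Rabs_def2 in Hy. destruct Hy as [Hy1 Hy2]. match goal with H : _ /\ _ |- _ => destruct H end.
    clearbody eps. change R in y. assert (Cy : IZR m < 10 * y < IZR m + 1) by lra. destruct (Loc y Cy) as [E1 E2].
    destruct (Loc x Hm) as [E3 E4].
    change (g x + 10 * (y - x) = g y). rewrite !g_eq. unfold fr. rewrite E1, E2, E3, E4. ring.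
  - auto_derive; [exact I|ring].
Qed.

Lemma orbit_range x0 n : 0 <= x0 < 1024 -> 0 <= orbit x0 n < 1024.
Proof. intros H. destruct n; simpl; [exact H| apply g_range]. Qed.

Lemma orbit_deriv x0 n : inL x0 -> is_derive g (orbit x0 n) 10.
Proof.
  intros [H0 HI]. set (x := orbit x0 n).
  assert (R0 : 0 <= x < 1024) by (apply orbit_range; simpl in H0; lra).
  pose proof (flr_spec (10 * x)) as [H1 H2].
  apply (g_deriv x (flr (10 * x))). split; [|lra].
  destruct H1 as [H1|H1]; [exact H1|]. exfalso. apply (HI n). fold x.
  assert (0 <= flr (10 * x) < 10240)%Z.
  { split; [apply le_IZR|apply lt_IZR]; lra. }
  exists (Z.to_nat (flr (10 * x))). split.
  { assert (E : (10240 = Z.to_nat 10240)%nat) by reflexivity. rewrite E. apply Z2Nat.inj_le; lia. }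
  rewrite INR_IZR_INZ, Z2Nat.id by lia. rewrite H1. field.
Qed.

Lemma sumR_const c n : sumR (fun _ => c) n = INR n * c.
Proof. induction n; simpl sumR; [simpl; ring|rewrite IHn, S_INR; ring]. Qed.

Theorem mainTheorem3 (x0 : R) (hx0 : inL x0) :
  (forall n : nat, ex_derive g (orbit x0 n)) /\
  is_lim_seq (lyap_avg x0) (ln 10).
Proof.
  split.
  - intros n. exists 10. apply orbit_deriv; exact hx0.
  - apply is_lim_seq_incr_1.
    apply is_lim_seq_ext with (fun _ => ln 10); [|apply is_lim_seq_const].
    intros n. unfold lyap_avg.
    assert (E : sumR (fun i => ln (Rabs (Derive g (orbit x0 i)))) (S n)
                = sumR (fun _ => ln 10) (S n)).
    { generalize (S n) as N; intros N; induction N as [|k IH]; simpl sumR; [reflexivity|].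
      rewrite IH. f_equal. rewrite (is_derive_unique _ _ 10) by (apply orbit_deriv; exact hx0).
      rewrite Rabs_pos_eq by lra. reflexivity. }
    rewrite E, sumR_const. field. apply not_0_INR. lia.
Qed.
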